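(* Let $G$ be a finite directed acyclic graph whose input nodes (the nodes with no incoming edge) are the coordinates of a vector $\bm x$, and let $o$ be any leaf node of $G$. For an input node $x$, let $\mathcal P(x,o)$ be the set of directed paths from $x$ to $o$; for a path ${\bm p}$, let $\tilde{\bm p}$ be the same path without its starting node $x$, and for a node $p$ let $d_p$ be its in-degree. Then $$\sum_{x\in\bm x}\ \sum_{{\bm p}\in\mathcal P(x,o)}\ \prod_{p\in\tilde{\bm p}}\frac{1}{d_p}=1.$$ *)

(* Defs.v *)
From mathcomp Require Import all_boot all_order all_algebra.
Set Implicit Arguments. Unset Strict Implicit. Unset Printing Implicit Defensive.
Import Order.TTheory GRing.Theory Num.Theory.

(* A finite directed graph: vertex set a finType V, edge relation e : rel V
   (e u v means there is an edge u -> v). *)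

Definition acyclic (V : finType) (e : rel V) : Prop :=
  forall (x : V) (p : seq V), path e x p -> p != [::] -> last x p != x.

Definition input_node (V : finType) (e : rel V) (x : V) : bool :=
  [forall y, ~~ e y x].

Definition leaf_node (V : finType) (e : rel V) (o : V) : bool :=
  [forall y, ~~ e o y].

Definition indeg (V : finType) (e : rel V) (v : V) : nat :=
  #|[set u | e u v]|.

(* A directed path from x to o is represented by x :: p where
   [path e x p] and [last x p = o]; p is the path without its start
   node (the tilde-path).  The set P(x,o) of such tails p.  Since in an
   acyclic graph every directed path visits at most #|V| nodes, the list
   of all such p is obtained by enumerating sequences of length < #|V|; distinct lengths give distinct sequences, so there are
   no duplicates. *)
Definition all_seqs_upto (V : finType) (m : nat) : seq (seq V) :=
  [seq val t | n <- iota 0 m, t <- enum [set: n.-tuple V]].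

Definition paths_tails (V : finType) (e : rel V) (x o : V) : seq (seq V) :=
  [seq p <- all_seqs_upto V #|V| | path e x p && (last x p == o)].

(* Main.v *)
Require Import Defs.
From mathcomp Require Import all_boot all_order all_algebra.
Import Order.TTheory GRing.Theory Num.Theory.

Section S.
Variables (V : finType).

Lemma all_seqs_spec m :
  uniq (all_seqs_upto V m) /\ forall s, (s \in all_seqs_upto V m) = (size s < m)%N.
Proof.
elim: m => [|m [IHu IHm]]; first by split=> // s; rewrite /all_seqs_upto.
have -> : all_seqs_upto V m.+1 = all_seqs_upto V m ++ [seq val t | t <- enum [set: m.-tuple V]].
  by rewrite /all_seqs_upto -addn1 iotaD map_cat flatten_cat /= cats0.
have Hm s : (s \in [seq val t | t <- enum [set: m.-tuple V]]) = (size s == m).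
  apply/mapP/idP => [[t _ ->]|/eqP Hs]; first by rewrite size_tuple.
  by exists (Tuple (introT eqP Hs)) => //; rewrite mem_enum inE.
split.
  rewrite cat_uniq IHu (map_inj_uniq val_inj) enum_uniq /= andbT.
  apply/hasPn => s; rewrite Hm IHm => /eqP ->; by rewrite ltnn.
by move=> s; rewrite mem_cat IHm Hm [in RHS]ltnS [in RHS]leq_eqVlt orbC.
Qed.

Variable (e : rel V).
Hypothesis acyc : acyclic e.

Lemma path_uniq x p : path e x p -> uniq (x :: p).
Proof.
elim: p x => [//|y p IH] x /= /andP [exy pp].
have := IH _ pp; rewrite /= => ->; rewrite andbT.
apply/negP => xin.
have H : path e x (y :: p) by rewrite /= exy pp.
have xin' : x \in y :: p by [].
move: H; case/splitPr: xin' => p1 p2.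
rewrite cat_path => /andP [H1 /= /andP [H2 _]].
have := @acyc x (rcons p1 x); rewrite rcons_path H1 H2 last_rcons eqxx.
move=> H; have : rcons p1 x != [::] by case: p1 {H1 H2 H}.
by move=> /(H isT).
Qed.

Lemma path_size x p : path e x p -> (size p < #|V|)%N.
Proof. move=> /path_uniq /card_uniqP H; rewrite -[X in (X <= _)%N]/(size (x::p)) -H; exact: max_card. Qed.

Lemma mem_pt x v p : (p \in paths_tails e x v) = path e x p && (last x p == v).
Proof.
rewrite mem_filter (proj2 (all_seqs_spec _)).
case pp: (path e x p) => //=; by rewrite (@path_size x p pp) andbT.
Qed.

Lemma uniq_pt x v : uniq (paths_tails e x v).
Proof. exact/filter_uniq/(proj1 (all_seqs_spec _)). Qed.


Local Open Scope ring_scope.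
Variable R : numFieldType.

Definition w (p : seq V) : R := \prod_(q <- p) (indeg e q)%:R^-1.
Definition F (v : V) : R := \sum_(x | input_node e x) \sum_(p <- paths_tails e x v) w p.

Lemma sum_mem (l1 l2 : seq (seq V)) (f : seq V -> R) :
  uniq l1 -> uniq l2 -> l1 =i l2 -> \sum_(p <- l1) f p = \sum_(p <- l2) f p.
Proof. by move=> u1 u2 H; apply: perm_big; apply: uniq_perm. Qed.

Lemma nil_part x v :
  \sum_(p <- paths_tails e x v | p == [::]) w p = (x == v)%:R.
Proof.
rewrite -big_filter (@sum_mem _ (if x == v then [:: [::]] else [::])).
- by case: eqP => _; rewrite ?big_nil ?big_seq1 /w ?big_nil.
- exact/filter_uniq/uniq_pt.
- by case: eqP.
move=> p; rewrite mem_filter mem_pt.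
by case: p => [|a p] /=; case: (x == v); rewrite ?inE.
Qed.

Lemma cons_part x v u : e u v ->
  (indeg e v)%:R^-1 * \sum_(p <- paths_tails e x u) w p =
  \sum_(p <- paths_tails e x v | (p != [::]) && (last x (belast x p) == u)) w p.
Proof.
move=> huv.
rewrite mulr_sumr.
have -> : \sum_(i <- paths_tails e x u) (indeg e v)%:R^-1 * w i =
          \sum_(i <- paths_tails e x u) w (rcons i v).
  by apply: eq_bigr => p _; rewrite /w big_rcons /= mulrC.
rewrite -[RHS]big_filter -(big_map (rcons^~ v) xpredT w); apply: sum_mem.
- by rewrite (map_inj_uniq (@rcons_injl _ v)) uniq_pt.
- exact/filter_uniq/uniq_pt.
move=> p; case/lastP: p => [|q y].
  rewrite mem_filter /=; apply/negP => /mapP [q _].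
  by case: q.
rewrite mem_filter mem_pt rcons_path last_rcons belast_rcons /=.
case: (y =P v) => [->|nyv].
  rewrite (mem_map (@rcons_injl _ v)).
  rewrite mem_pt; case: (last x q =P u) => [->|]; rewrite ?huv ?andbT ?andbF //.
  by case: q.
rewrite !andbF; apply/negbTE/negP => /mapP [q' _] /(congr1 (last x)).
by rewrite !last_rcons => /nyv.
Qed.

Lemma rec_inner x v :
  \sum_(p <- paths_tails e x v) w p =
  (x == v)%:R + (indeg e v)%:R^-1 * \sum_(u | e u v) \sum_(p <- paths_tails e x u) w p.
Proof.
rewrite (bigID (fun p => p == [::])) /= nil_part; congr (_ + _).
rewrite mulr_sumr.
rewrite (eq_bigr (fun u => \sum_(p <- paths_tails e x v | (p != [::]) && (last x (belast x p) == u)) w p)); last by move=> u huv; rewrite cons_part.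
under [RHS]eq_bigr do rewrite big_mkcondr.
rewrite exchange_big /= big_seq_cond [RHS]big_seq_cond.
apply: eq_bigr => p /andP [pin pnil].
rewrite -big_mkcondr.
move: pin; rewrite mem_pt; case/lastP: p pnil => [//|q y] _.
rewrite rcons_path last_rcons belast_rcons /= => /andP [/andP [_ hy] /eqP <-].
rewrite (big_pred1 (last x q)) //.
move=> u /=; rewrite [RHS]eq_sym; case: eqP => [<-|]; by rewrite ?hy ?andbF ?andbT ?eqxx.
Qed.

Lemma F1 N v : (forall x p, path e x p -> last x p = v -> (size p < N)%N) -> F v = 1.
Proof.
elim: N v => [|N IH] v H; first by have := H v [::] isT erefl.
rewrite /F; under eq_bigr do rewrite rec_inner.
rewrite big_split /= -mulr_sumr exchange_big /=.
have -> : \sum_(u | e u v) \sum_(i | input_node e i) \sum_(p <- paths_tails e i u) w p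
          = \sum_(u | e u v) (1 : R).
  apply: eq_bigr => u huv; apply: IH => x p pp pl.
  by move: (H x (rcons p v)); rewrite rcons_path pp pl huv last_rcons size_rcons ltnS; apply.
rewrite (eq_bigr (fun x => if x == v then 1 else 0)); last by move=> x _; case: eqP.
rewrite -big_mkcondr.
case: (boolP (input_node e v)) => hv.
  rewrite (big_pred1 v); last by move=> x /=; case: eqP => [->|]; rewrite ?hv ?andbF.
  rewrite big_pred0 ?mulr0 ?addr0 // => u.
  by move/forallP: hv => /(_ u) /negbTE.
rewrite big_pred0; last by move=> x /=; case: eqP => [->|]; rewrite ?(negbTE hv) ?andbF.
rewrite add0r sumr_const.
have -> : #|[pred u | e u v]| = indeg e v by rewrite /indeg cardsE.
apply: mulVf; rewrite pnatr_eq0 -lt0n.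
move: hv; rewrite negb_forall => /existsP [y]; rewrite negbK => hy.
by apply/card_gt0P; exists y; rewrite inE.
Qed.
End S.
Local Open Scope ring_scope.

Theorem lemma2 (R : numFieldType) (V : finType) (e : rel V) (o : V) :
  acyclic e -> leaf_node e o ->
  \sum_(x | input_node e x)
     \sum_(p <- paths_tails e x o)
        \prod_(q <- p) (indeg e q)%:R^-1 = (1 : R).
Proof.
move=> acyc _; apply: (@F1 V e acyc R #|V|) => x p pp _.
exact: (@path_size V e acyc x p pp).
Qed.
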